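(* Consider the network system $(\Sigma,\Pi,\mathcal G)$ and suppose every agent $\Sigma_i$ and every controller $\Pi_e$ is MEICMP. Let $K$ and $\Gamma$ be the sums of the integral functions of the agents and controllers respectively. For any 4-tuple of vectors $(\mathrm u,\mathrm y,\zeta,\mu)$ with $\mathrm u,\mathrm y\in\mathbb R^{d|\mathbb V|}$, $\zeta,\mu\in\mathbb R^{d|\mathbb E|}$, the following are equivalent: (i) $(\mathrm u,\mathrm y,\zeta,\mu)$ is a steady state of the closed loop; (ii) $(\mathrm u,\mu)$ and $(\mathrm y,\zeta)$ are dual optimal solutions of (OFP) and (OPP), i.e. $(\mathrm u,\mu)$ is feasible and optimal for (OFP), $(\mathrm y,\zeta)$ is feasible and optimal for (OPP), and $K(\mathrm u)+\Gamma^\star(\mu)+K^\star(\mathrm y)+\Gamma(\zeta)=0$.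
   Context: Graph and network: $\mathcal G=(\mathbb V,\mathbb E)$ finite graph with arbitrarily oriented edges, incidence matrix $E$ ($E_{ik}=-1$, $E_{jk}=1$ for edge $k=(i,j)$, other entries of column $k$ zero), $d\ge1$, $\mathcal E=E\otimes I_d$. Agents $\Sigma_i$: $\dot x_i=f_i(x_i,u_i,\mathrm w_i)$, $y_i=h_i(x_i,u_i,\mathrm w_i)$ with $u_i,y_i\in\mathbb R^d$, $\mathrm w_i$ a fixed constant; controllers $\Pi_e$: $\dot\eta_e=\phi_e(\eta_e,\zeta_e)$, $\mu_e=\psi_e(\eta_e,\zeta_e)$, $\zeta_e,\mu_e\in\mathbb R^d$; closed loop $(\Sigma,\Pi,\mathcal G)$: $\zeta=\mathcal E^Ty$, $u=-\mathcal E\mu$ (stacked). Steady-state relations: $k_i=\{(\mathrm u_i,\mathrm y_i):\exists\mathrm x_i,\ f_i(\mathrm x_i,\mathrm u_i,\mathrm w_i)=0,\ \mathrm y_i=h_i(\mathrm x_i,\mathrm u_i,\mathrm w_i)\}$, $\gamma_e=\{(\zeta_e,\mu_e):\exists\eta_e,\ \phi_e(\eta_e,\zeta_e)=0,\ \mu_e=\psi_e(\eta_e,\zeta_e)\}$, stacked $k,\gamma$. A 4-tuple of constants $(\mathrm u,\mathrm y,\zeta,\mu)$ is a steady state of the closed loop if there are constant states $\mathrm x_i,\eta_e$ with $f_i(\mathrm x_i,\mathrm u_i,\mathrm w_i)=0$, $\mathrm y_i=h_i(\mathrm x_i,\mathrm u_i,\mathrm w_i)$, $\phi_e(\eta_e,\zeta_e)=0$,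 $\mu_e=\psi_e(\eta_e,\zeta_e)$, $\zeta=\mathcal E^T\mathrm y$, $\mathrm u=-\mathcal E\mu$. Cyclic monotonicity: $R\subseteq\mathbb R^d\times\mathbb R^d$ is cyclically monotone (CM) if for all $N\ge1$ and all $(u_1,y_1),\dots,(u_N,y_N)\in R$, $\sum_{i=1}^N y_i^T(u_i-u_{i-1})\ge0$ with $u_0=u_N$; it is maximal CM if it is CM and not strictly contained in a larger CM relation. Passivity: a system with input $u$, output $y$, state $x$ is passive with respect to a steady-state pair $(\mathrm u,\mathrm y)$ if there is a storage function $S(x)\ge0$ with $S(x(t_1))-S(x(t_0))\le\int_{t_0}^{t_1}(y-\mathrm y)^T(u-\mathrm u)\,dt$ along all trajectories; output-strictly passive if additionally there is $\rho>0$ with $S(x(t_1))-S(x(t_0))\le\int_{t_0}^{t_1}[-\rho\|y-\mathrm y\|^2+(y-\mathrm y)^T(u-\mathrm u)]dt$. A system is MEICMP (maximal equilibrium-independent cyclically monotone passive) if it is passive with respect to every steady-state input-output pair and its steady-state input-output relation is maximal CM. Integral functions and problems: every maximal CM relation $R$ equals the subdifferential $\partial F$ of a closed proper convex $F:\mathbb R^d\to\mathbb R\cup\{+\infty\}$, unique up to an additive constant, called its integral function. Let $K_i$, $\Gamma_e$ be integral functions with $\partial K_i=k_i$, $\partial\Gamma_e=\gamma_e$; $K(\mathrm u)=\sum_iK_i(\mathrm u_i)$, $\Gamma(\zeta)=\sum_e\Gamma_e(\zeta_e)$; $F^\star(y)=\sup_u\{y^Tu-F(u)\}$ denotes the convex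 conjugate. (OPP): minimize $K^\star(\mathrm y)+\Gamma(\zeta)$ over $(\mathrm y,\zeta)$ subject to $\mathcal E^T\mathrm y=\zeta$. (OFP): minimize $K(\mathrm u)+\Gamma^\star(\mu)$ over $(\mathrm u,\mu)$ subject to $\mathrm u=-\mathcal E\mu$. *)

(* Defs.v *)
From Stdlib Require Import Reals ClassicalEpsilon.
From HB Require Import structures.
From mathcomp Require Import all_boot.

Set Implicit Arguments.
Unset Strict Implicit.
Unset Printing Implicit Defensive.

Open Scope R_scope.

Inductive erx : Type := EFin (r : R) | EPInf | EMInf.

Definition ele (a b : erx) : Prop :=
  match a, b with
  | EMInf, _ => True
  | _, EPInf => True
  | EFin x, EFin y => x <= y
  | _, _ => False
  end.

(* inf-addition: +oo absorbs (convention used in minimization problems) *)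
Definition eadd (a b : erx) : erx :=
  match a, b with
  | EPInf, _ | _, EPInf => EPInf
  | EMInf, _ | _, EMInf => EMInf
  | EFin x, EFin y => EFin (x + y)
  end.

Definition esup (S : R -> Prop) : erx :=
  match excluded_middle_informative (exists r, S r) with
  | left Hne =>
      match excluded_middle_informative (bound S) with
      | left Hb => EFin (proj1_sig (completeness S Hb Hne))
      | right _ => EPInf
      end
  | right _ => EMInf
  end.

Definition Vec (d : nat) := 'I_d -> R.
Definition vzero (d : nat) : Vec d := fun _ => 0.
Definition vsub (d : nat) (x y : Vec d) : Vec d := fun k => x k - y k.
Definition vadd (d : nat) (x y : Vec d) : Vec d := fun k => x k + y k.
Definition vscale (d : nat) (t : R) (x : Vec d) : Vec d := fun k => t * x k.
Definition vdot (d : nat) (x y : Vec d) : R := \big[Rplus/0]_(k < d) (x k * y k).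

(* stacked vectors: one R^d block per vertex (or per edge) *)
Definition sdot (n d : nat) (x y : 'I_n -> Vec d) : R :=
  \big[Rplus/0]_(i < n) vdot (x i) (y i).

Definition conjugate (V : Type) (dot : V -> V -> R) (F : V -> erx) (y : V) : erx :=
  match excluded_middle_informative (exists u, F u = EMInf) with
  | left _ => EPInf
  | right _ => esup (fun r => exists u r', F u = EFin r' /\ r = dot y u - r')
  end.

Definition proper_fn (d : nat) (F : Vec d -> erx) : Prop :=
  (forall u, F u <> EMInf) /\ (exists u, F u <> EPInf).

(* convex: the epigraph is convex *)
Definition convex_fn (d : nat) (F : Vec d -> erx) : Prop :=
  forall (x y : Vec d) (a b t : R), 0 <= t <= 1 ->
    ele (F x) (EFin a) -> ele (F y) (EFin b) ->
    ele (F (vadd (vscale t x) (vscale (1 - t) y))) (EFin (t * a + (1 - t) * b)).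

(* closed: the epigraph is (sequentially) closed in R^d x R *)
Definition closed_fn (d : nat) (F : Vec d -> erx) : Prop :=
  forall (xs : nat -> Vec d) (as_ : nat -> R) (x : Vec d) (a : R),
    (forall j, ele (F (xs j)) (EFin (as_ j))) ->
    (forall k, Un_cv (fun j => xs j k) (x k)) ->
    Un_cv as_ a ->
    ele (F x) (EFin a).

Definition subdiff (d : nat) (F : Vec d -> erx) (u y : Vec d) : Prop :=
  exists r, F u = EFin r /\
    forall v, ele (EFin (r + vdot y (vsub v u))) (F v).

Definition integral_function (d : nat) (Rel : Vec d -> Vec d -> Prop)
    (F : Vec d -> erx) : Prop :=
  closed_fn F /\ proper_fn F /\ convex_fn F /\
  (forall u y, Rel u y <-> subdiff F u y).

Definition prevN (N i : nat) : nat := if i == 0%N then N.-1 else i.-1.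

(* indices 0..N-1 with u_{-1} := u_{N-1}  (same as 1..N with u_0 = u_N) *)
Definition cyc_mono (d : nat) (Rel : Vec d -> Vec d -> Prop) : Prop :=
  forall (N : nat) (us ys : nat -> Vec d), (0 < N)%N ->
    (forall i, (i < N)%N -> Rel (us i) (ys i)) ->
    0 <= \big[Rplus/0]_(i < N) vdot (ys i) (vsub (us i) (us (prevN N i))).

Definition max_cyc_mono (d : nat) (Rel : Vec d -> Vec d -> Prop) : Prop :=
  cyc_mono Rel /\
  forall Rel' : Vec d -> Vec d -> Prop, cyc_mono Rel' ->
    (forall u y, Rel u y -> Rel' u y) -> (forall u y, Rel' u y -> Rel u y).

(* ---------- systems  dx/dt = F(x,u), y = H(x,u) with state in R^p ---------- *)
Definition ss_rel (p d : nat) (F : Vec p -> Vec d -> Vec p) (H : Vec p -> Vec d -> Vec d)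
    (u y : Vec d) : Prop :=
  exists x : Vec p, F x u = @vzero p /\ y = H x u.

Definition passive_wrt (p d : nat) (F : Vec p -> Vec d -> Vec p)
    (H : Vec p -> Vec d -> Vec d) (ub yb : Vec d) : Prop :=
  exists S : Vec p -> R, (forall x, 0 <= S x) /\
    forall (x : R -> Vec p) (u : R -> Vec d) (t0 t1 : R), t0 <= t1 ->
      (forall t j, derivable_pt_lim (fun s => x s j) t (F (x t) (u t) j)) ->
      forall pr : Riemann_integrable
          (fun t => vdot (vsub (H (x t) (u t)) yb) (vsub (u t) ub)) t0 t1,
        S (x t1) - S (x t0) <= RiemannInt pr.

Definition MEICMP (p d : nat) (F : Vec p -> Vec d -> Vec p)
    (H : Vec p -> Vec d -> Vec d) : Prop :=
  (forall ub yb, ss_rel F H ub yb -> passive_wrt F H ub yb) /\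
  max_cyc_mono (ss_rel F H).

(* incidence matrix: edge e = (src e, dst e), E_{src e, e} = -1, E_{dst e, e} = 1 *)
Definition inc (n m : nat) (src dst : 'I_m -> 'I_n) (i : 'I_n) (e : 'I_m) : R :=
  if i == dst e then 1 else if i == src e then -1 else 0.

(* (E ⊗ I_d)^T y *)
Definition ETy (n m d : nat) (src dst : 'I_m -> 'I_n) (y : 'I_n -> Vec d) : 'I_m -> Vec d :=
  fun e k => \big[Rplus/0]_(i < n) (inc src dst i e * y i k).

(* -(E ⊗ I_d) mu *)
Definition mEmu (n m d : nat) (src dst : 'I_m -> 'I_n) (mu : 'I_m -> Vec d) : 'I_n -> Vec d :=
  fun i k => - \big[Rplus/0]_(e < m) (inc src dst i e * mu e k).

Definition closed_loop_ss (n m d : nat) (src dst : 'I_m -> 'I_n)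
    (W : Type) (w : 'I_n -> W) (p : 'I_n -> nat)
    (f : forall i, Vec (p i) -> Vec d -> W -> Vec (p i))
    (h : forall i, Vec (p i) -> Vec d -> W -> Vec d)
    (q : 'I_m -> nat)
    (phi : forall e, Vec (q e) -> Vec d -> Vec (q e))
    (psi : forall e, Vec (q e) -> Vec d -> Vec d)
    (u y : 'I_n -> Vec d) (zeta mu : 'I_m -> Vec d) : Prop :=
  exists (xs : forall i, Vec (p i)) (etas : forall e, Vec (q e)),
    (forall i, f i (xs i) (u i) (w i) = @vzero (p i)) /\
    (forall i, y i = h i (xs i) (u i) (w i)) /\
    (forall e, phi e (etas e) (zeta e) = @vzero (q e)) /\
    (forall e, mu e = psi e (etas e) (zeta e)) /\
    zeta = ETy src dst y /\
    u = mEmu src dst mu.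

Definition esum (N d : nat) (Fs : 'I_N -> Vec d -> erx) (x : 'I_N -> Vec d) : erx :=
  \big[eadd/EFin 0]_(i < N) Fs i (x i).

Definition OPP_obj (n m d : nat) (Ks : 'I_n -> Vec d -> erx) (Gs : 'I_m -> Vec d -> erx)
    (y : 'I_n -> Vec d) (zeta : 'I_m -> Vec d) : erx :=
  eadd (conjugate (@sdot n d) (esum Ks) y) (esum Gs zeta).

Definition OPP_optimal (n m d : nat) (src dst : 'I_m -> 'I_n)
    (Ks : 'I_n -> Vec d -> erx) (Gs : 'I_m -> Vec d -> erx)
    (y : 'I_n -> Vec d) (zeta : 'I_m -> Vec d) : Prop :=
  ETy src dst y = zeta /\
  forall y' zeta', ETy src dst y' = zeta' ->
    ele (OPP_obj Ks Gs y zeta) (OPP_obj Ks Gs y' zeta').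

Definition OFP_obj (n m d : nat) (Ks : 'I_n -> Vec d -> erx) (Gs : 'I_m -> Vec d -> erx)
    (u : 'I_n -> Vec d) (mu : 'I_m -> Vec d) : erx :=
  eadd (esum Ks u) (conjugate (@sdot m d) (esum Gs) mu).

Definition OFP_optimal (n m d : nat) (src dst : 'I_m -> 'I_n)
    (Ks : 'I_n -> Vec d -> erx) (Gs : 'I_m -> Vec d -> erx)
    (u : 'I_n -> Vec d) (mu : 'I_m -> Vec d) : Prop :=
  u = mEmu src dst mu /\
  forall u' mu', u' = mEmu src dst mu' ->
    ele (OFP_obj Ks Gs u mu) (OFP_obj Ks Gs u' mu').

(* Main.v *)
Require Import Defs.
From Stdlib Require Import Reals ClassicalEpsilon.
From HB Require Import structures.
From mathcomp Require Import all_boot.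
From Stdlib Require Import Lra.
Open Scope R_scope.

Lemma eadd_assoc : associative eadd.
Proof. by case=>[x||][y||][z||] //=; rewrite Rplus_assoc. Qed.
Lemma eadd_comm : commutative eadd.
Proof. by case=>[x||][y||] //=; rewrite Rplus_comm. Qed.
Lemma eadd_0l : left_id (EFin 0) eadd.
Proof. by case=>[x||] //=; rewrite Rplus_0_l. Qed.
HB.instance Definition _ := Monoid.isComLaw.Build erx (EFin 0) eadd eadd_assoc eadd_comm eadd_0l.
Lemma Rplus_assoc' : associative Rplus. Proof. by move=> *; rewrite Rplus_assoc. Qed.
HB.instance Definition _ := Monoid.isComLaw.Build R 0 Rplus Rplus_assoc' Rplus_comm Rplus_0_l.

Lemma sumD (N : nat) (f g : 'I_N -> R) :
  \big[Rplus/0]_(i < N) (f i + g i) = \big[Rplus/0]_(i < N) f i + \big[Rplus/0]_(i < N) g i.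
Proof.
apply: (big_rec3 (fun a b c => a = b + c)); first by ring.
by move=> i a b c _ ->; ring.
Qed.

Lemma sumB (N : nat) (f g : 'I_N -> R) :
  \big[Rplus/0]_(i < N) (f i - g i) = \big[Rplus/0]_(i < N) f i - \big[Rplus/0]_(i < N) g i.
Proof.
apply: (big_rec3 (fun a b c => a = b - c)); first by ring.
by move=> i a b c _ ->; ring.
Qed.

Lemma sumMl (N : nat) (c : R) (f : 'I_N -> R) :
  \big[Rplus/0]_(i < N) (c * f i) = c * \big[Rplus/0]_(i < N) f i.
Proof.
apply: (big_rec2 (fun a b => a = c * b)); first by ring.
by move=> i a b _ ->; ring.
Qed.

Lemma sum_le (N : nat) (f g : 'I_N -> R) : (forall i, f i <= g i) ->
  \big[Rplus/0]_(i < N) f i <= \big[Rplus/0]_(i < N) g i.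
Proof.
move=> H; apply: (big_rec2 (fun a b => a <= b)); first by lra.
by move=> i a b _ Hab; have := H i; lra.
Qed.

Lemma sum_upd (N : nat) (i : 'I_N) (f g : 'I_N -> R) : (forall j, j != i -> f j = g j) ->
  \big[Rplus/0]_(j < N) f j - \big[Rplus/0]_(j < N) g j = f i - g i.
Proof.
move=> H; rewrite (bigD1 i) //= [X in _ - X](bigD1 i) //=.
rewrite (eq_bigr g); last by move=> j Hj; apply: H.
ring.
Qed.

Lemma vdot_sub d (y a b : Vec d) : vdot y (vsub a b) = vdot y a - vdot y b.
Proof. rewrite /vdot /vsub -sumB; apply: eq_bigr => k _; ring. Qed.

Lemma choice_dep (I : Type) (P : I -> Type) (Q : forall i, P i -> Prop) :
  (forall i, exists x, Q i x) -> exists g : forall i, P i, forall i, Q i (g i).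
Proof.
move=> H; exists (fun i => proj1_sig (constructive_indefinite_description _ (H i))).
by move=> i; exact: (proj2_sig (constructive_indefinite_description _ (H i))).
Qed.

Lemma esup_fin (S : R -> Prop) s : esup S = EFin s -> forall r, S r -> r <= s.
Proof.
rewrite /esup; case: excluded_middle_informative => [Hne|] //.
case: excluded_middle_informative => [Hb|] //.
case: (completeness S Hb Hne) => s' [Hub _] /= [<-]. exact: Hub.
Qed.

Lemma esup_max (S : R -> Prop) r0 : S r0 -> (forall r, S r -> r <= r0) -> esup S = EFin r0.
Proof.
move=> H0 Hle; rewrite /esup; case: excluded_middle_informative => [Hne|Hn]; last first.
  by exfalso; apply: Hn; exists r0.
case: excluded_middle_informative => [Hb|Hn]; last by exfalso; apply: Hn; exists r0.
case: (completeness S Hb Hne) => s' [Hub Hlub] /=.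
f_equal; apply: Rle_antisym; [apply: Hlub; exact: Hle | exact: Hub].
Qed.

Lemma esup_ne (S : R -> Prop) : (exists r, S r) -> esup S <> EMInf.
Proof.
move=> H; rewrite /esup; case: excluded_middle_informative => [Hne|//].
by case: excluded_middle_informative.
Qed.

Lemma conj_FY (V : Type) (dot : V -> V -> R) (F : V -> erx) x y a b :
  (forall u, F u <> EMInf) -> F x = EFin a -> conjugate dot F y = EFin b ->
  dot y x - a <= b.
Proof.
move=> HF Hx; rewrite /conjugate; case: excluded_middle_informative => [[u Hu]|_].
  by exfalso; exact: HF u Hu.
move=> Hs; apply: (esup_fin _ _ Hs (dot y x - a)); by exists x, a.
Qed.

Lemma conj_notM (V : Type) (dot : V -> V -> R) (F : V -> erx) y :
  (exists x a, F x = EFin a) -> conjugate dot F y <> EMInf.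
Proof.
move=> [x [a Hx]]; rewrite /conjugate; case: excluded_middle_informative => // _.
apply: esup_ne; by exists (dot y x - a), x, a.
Qed.

Lemma conj_eq (V : Type) (dot : V -> V -> R) (F : V -> erx) x y a :
  (forall u, F u <> EMInf) -> F x = EFin a ->
  (forall x' a', F x' = EFin a' -> dot y x' - a' <= dot y x - a) ->
  conjugate dot F y = EFin (dot y x - a).
Proof.
move=> HF Hx H; rewrite /conjugate; case: excluded_middle_informative => [[u Hu]|_].
  by exfalso; exact: HF u Hu.
apply: esup_max; first by exists x, a.
by move=> r [x' [a' [Hx' ->]]]; apply: H.
Qed.

Lemma esum_fin N d (Fs : 'I_N -> Vec d -> erx) x (r : 'I_N -> R) :
  (forall i, Fs i (x i) = EFin (r i)) -> esum Fs x = EFin (\big[Rplus/0]_(i < N) r i).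
Proof.
move=> H; rewrite /esum.
apply: (big_rec2 (fun a b => a = EFin b)) => // i a b _ ->; by rewrite H.
Qed.

Lemma esum_notM N d (Fs : 'I_N -> Vec d -> erx) x :
  (forall i, Fs i (x i) <> EMInf) -> esum Fs x <> EMInf.
Proof.
move=> H; rewrite /esum.
apply: (big_rec (fun a => a <> EMInf)) => // i a _ Ha.
move: (H i); case: (Fs i (x i)) => [r||] //; case: a Ha => //.
Qed.

Lemma esum_fin_inv N d (Fs : 'I_N -> Vec d -> erx) x a :
  esum Fs x = EFin a -> forall i, exists r, Fs i (x i) = EFin r.
Proof.
rewrite /esum => H i; move: H; rewrite (bigD1 i) //=.
case: (Fs i (x i)) => [r||]; first by exists r.
  by [].
by case: (\big[eadd/EFin 0]_(j < N | j != i) Fs j (x j)).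
Qed.

Lemma stack_notM N d (Fs : 'I_N -> Vec d -> erx) :
  (forall i, proper_fn (Fs i)) -> forall x, esum Fs x <> EMInf.
Proof. move=> HP x; apply: esum_notM => i; exact: (proj1 (HP i)). Qed.

Lemma stack_fin N d (Fs : 'I_N -> Vec d -> erx) :
  (forall i, proper_fn (Fs i)) -> exists x a, esum Fs x = EFin a.
Proof.
move=> HP.
have H : forall i, exists xr : (Vec d * R)%type, Fs i xr.1 = EFin xr.2.
  move=> i; case: (HP i) => HM [u Hu]; move: (HM u) Hu.
  case E: (Fs i u) => [r||] // _ _; by exists (u, r).
case: (choice_dep _ (fun _ => (Vec d * R)%type) (fun i xr => Fs i xr.1 = EFin xr.2) H) => g Hg.
exists (fun i => (g i).1), (\big[Rplus/0]_(i < N) (g i).2); exact: esum_fin.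
Qed.

Lemma FYeq N d (Fs : 'I_N -> Vec d -> erx) x y :
  (forall i, proper_fn (Fs i)) -> (forall i, subdiff (Fs i) (x i) (y i)) ->
  exists a, esum Fs x = EFin a /\
    conjugate (@sdot N d) (esum Fs) y = EFin (sdot y x - a).
Proof.
move=> HP Hs.
case: (choice_dep _ (fun _ => R) (fun i r => Fs i (x i) = EFin r /\
    forall v, ele (EFin (r + vdot (y i) (vsub v (x i)))) (Fs i v)) Hs) => r Hr.
have Ex : esum Fs x = EFin (\big[Rplus/0]_(i < N) r i).
  by apply: esum_fin => i; case: (Hr i).
exists (\big[Rplus/0]_(i < N) r i); split => //.
apply: conj_eq => //; first exact: stack_notM.
move=> x' a' Hx'.
have Hf := esum_fin_inv _ _ _ _ _ Hx'.
case: (choice_dep _ (fun _ => R) (fun i r => Fs i (x' i) = EFin r) Hf) => r' Hr'.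
rewrite (esum_fin _ _ _ _ r' Hr') in Hx'; case: Hx' => <-.
have Hle : forall i, r i + vdot (y i) (vsub (x' i) (x i)) <= r' i.
  by move=> i; case: (Hr i) => _ /(_ (x' i)); rewrite Hr'.
have := sum_le _ _ _ Hle; rewrite sumD.
have -> : \big[Rplus/0]_(i < N) vdot (y i) (vsub (x' i) (x i)) = sdot y x' - sdot y x.
  by rewrite /sdot -sumB; apply: eq_bigr => i _; rewrite vdot_sub.
move=> HH. set A := \big[Rplus/0]_(i < N) r i. set B := \big[Rplus/0]_(i < N) r' i. change (A + (sdot y x' - sdot y x) <= B) in HH. lra.
Qed.

Lemma FYrev N d (Fs : 'I_N -> Vec d -> erx) x y a b :
  (forall i, proper_fn (Fs i)) -> esum Fs x = EFin a ->
  conjugate (@sdot N d) (esum Fs) y = EFin b -> a + b = sdot y x ->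
  forall i, subdiff (Fs i) (x i) (y i).
Proof.
move=> HP Hx Hc Hab i.
have Hf := esum_fin_inv _ _ _ _ _ Hx.
case: (choice_dep _ (fun _ => R) (fun i r => Fs i (x i) = EFin r) Hf) => r Hr.
have Ha := esum_fin _ _ _ _ r Hr; rewrite Hx in Ha; case: Ha => Ha.
exists (r i); split => // v.
case Ev: (Fs i v) => [av||] //; last by exfalso; exact: (proj1 (HP i)) v Ev.
pose x' := fun j => if j == i then v else x j.
pose r' := fun j => if j == i then av else r j.
have Hx' : esum Fs x' = EFin (\big[Rplus/0]_(j < N) r' j).
  apply: esum_fin => j; rewrite /x' /r'; case: eqP => [->|_] //.
have := conj_FY _ _ _ _ _ _ _ (stack_notM _ _ _ HP) Hx' Hc.
have E1 := sum_upd _ i r' r (fun j (Hj : j != i) => ifF _ _ (negbTE Hj)).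
have E2 : sdot y x' - sdot y x = vdot (y i) v - vdot (y i) (x i).
  have := sum_upd _ i (fun j => vdot (y j) (x' j)) (fun j => vdot (y j) (x j)).
  rewrite /x' eqxx; apply => j Hj; by rewrite (negbTE Hj).
rewrite /r' eqxx in E1.
simpl; rewrite vdot_sub. rewrite /sdot in E2 Hab. rewrite /sdot.
move=> HH; rewrite /r' /x' in HH E2 *; subst a. set S1 := \big[Rplus/0]_(j < N) (if j == i then av else r j) in E1 HH. set S2 := \big[Rplus/0]_(i0 < N) vdot (y i0) (if i0 == i then v else x i0) in HH E2. set S3 := \big[Rplus/0]_(i < N) vdot (y i) (x i) in E2 Hab. set S4 := \big[Rplus/0]_(i < N) r i in E1 Hab. lra.
Qed.

Lemma sumN (N : nat) (f : 'I_N -> R) :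
  \big[Rplus/0]_(i < N) (- f i) = - \big[Rplus/0]_(i < N) f i.
Proof.
apply: (big_rec2 (fun a b => a = - b)); first by ring.
by move=> i a b _ ->; ring.
Qed.

Lemma sum_exch (a b : nat) (F : 'I_a -> 'I_b -> R) :
  \big[Rplus/0]_(i < a) \big[Rplus/0]_(j < b) F i j =
  \big[Rplus/0]_(j < b) \big[Rplus/0]_(i < a) F i j.
Proof. exact: exchange_big. Qed.

Lemma dual_id n m d (src dst : 'I_m -> 'I_n) (y : 'I_n -> Vec d) (mu : 'I_m -> Vec d) :
  sdot y (mEmu src dst mu) + sdot mu (ETy src dst y) = 0.
Proof.
pose T i e k := inc src dst i e * y i k * mu e k.
have HA : sdot y (mEmu src dst mu) =
  - \big[Rplus/0]_(i < n) \big[Rplus/0]_(e < m) \big[Rplus/0]_(k < d) T i e k.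
  rewrite /sdot -sumN; apply: eq_bigr => i _.
  rewrite /vdot /mEmu [X in _ = - X]sum_exch /= -sumN.
  apply: (@eq_bigr R 0 Rplus (ordinal d)) => k _; rewrite -sumN -sumMl -sumN; apply: eq_bigr => e _; rewrite /T; ring.
have HB : sdot mu (ETy src dst y) =
  \big[Rplus/0]_(e < m) \big[Rplus/0]_(i < n) \big[Rplus/0]_(k < d) T i e k.
  rewrite /sdot; apply: eq_bigr => e _.
  rewrite /vdot /ETy [X in _ = X]sum_exch /=.
  apply: eq_bigr => k _; rewrite -sumMl; apply: eq_bigr => i _; rewrite /T; ring.
rewrite HA HB [X in - X + _ = _]sum_exch /=; ring.
Qed.

Theorem mainTheorem3 (d n m : nat) (Hd : (0 < d)%N)
    (src dst : 'I_m -> 'I_n) (Hnoloop : forall e, src e != dst e)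
    (W : Type) (w : 'I_n -> W) (p : 'I_n -> nat)
    (f : forall i, Vec (p i) -> Vec d -> W -> Vec (p i))
    (h : forall i, Vec (p i) -> Vec d -> W -> Vec d)
    (q : 'I_m -> nat)
    (phi : forall e, Vec (q e) -> Vec d -> Vec (q e))
    (psi : forall e, Vec (q e) -> Vec d -> Vec d)
    (HA : forall i, MEICMP (fun x u => f i x u (w i)) (fun x u => h i x u (w i)))
    (HC : forall e, MEICMP (phi e) (psi e))
    (Ks : 'I_n -> Vec d -> erx) (Gs : 'I_m -> Vec d -> erx)
    (HK : forall i, integral_function (ss_rel (fun x u => f i x u (w i))
                                              (fun x u => h i x u (w i))) (Ks i))
    (HG : forall e, integral_function (ss_rel (phi e) (psi e)) (Gs e))
    (u y : 'I_n -> Vec d) (zeta mu : 'I_m -> Vec d) :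
  closed_loop_ss src dst w f h phi psi u y zeta mu
  <->
  (OFP_optimal src dst Ks Gs u mu /\ OPP_optimal src dst Ks Gs y zeta /\
   eadd (OFP_obj Ks Gs u mu) (OPP_obj Ks Gs y zeta) = EFin 0).
Proof.
have HPK : forall i, proper_fn (Ks i) by move=> i; case: (HK i) => _ [].
have HPG : forall e, proper_fn (Gs e) by move=> e; case: (HG e) => _ [].
have nK := stack_notM n d Ks HPK.
have nG := stack_notM m d Gs HPG.
have nKc := fun y => conj_notM _ (@sdot n d) (esum Ks) y (stack_fin n d Ks HPK).
have nGc := fun y => conj_notM _ (@sdot m d) (esum Gs) y (stack_fin m d Gs HPG).
split.
- move=> [xs [etas [Hf [Hh [Hphi [Hpsi [Hz Hu]]]]]]].
  have SK : forall i, subdiff (Ks i) (u i) (y i).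
    move=> i; case: (HK i) => _ [_ [_ HR]]; apply/HR; by exists (xs i).
  have SG : forall e, subdiff (Gs e) (zeta e) (mu e).
    move=> e; case: (HG e) => _ [_ [_ HR]]; apply/HR; by exists (etas e).
  case: (FYeq n d Ks u y HPK SK) => a [Ea Eb].
  case: (FYeq m d Gs zeta mu HPG SG) => c [Ec Ed].
  have Hid := dual_id n m d src dst y mu; rewrite -Hu -Hz in Hid.
  split; [|split].
  + split => // u' mu' Hu'.
    rewrite /OFP_obj Ea Ed.
    case E1: (esum Ks u') => [a'||];
    case E2: (conjugate (@sdot m d) (esum Gs) mu') => [b'||] //=;
      try (by exfalso; exact: nK u' E1); try (by exfalso; exact: nGc mu' E2).
    have F1 := conj_FY _ _ _ _ _ _ _ nK E1 Eb.
    have F2 := conj_FY _ _ _ _ _ _ _ nG Ec E2.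
    have Hid' := dual_id n m d src dst y mu'; rewrite -Hu' -Hz in Hid'.
    lra.
  + split; first by rewrite Hz.
    move=> y' z' Hz'.
    rewrite /OPP_obj Eb Ec.
    case E1: (conjugate (@sdot n d) (esum Ks) y') => [b'||];
    case E2: (esum Gs z') => [c'||] //=;
      try (by exfalso; exact: nKc y' E1); try (by exfalso; exact: nG z' E2).
    have F1 := conj_FY _ _ _ _ _ _ _ nK Ea E1.
    have F2 := conj_FY _ _ _ _ _ _ _ nG E2 Ed.
    have Hid' := dual_id n m d src dst y' mu; rewrite -Hu Hz' in Hid'.
    lra.
  + rewrite /OFP_obj /OPP_obj Ea Ed Eb Ec /=; f_equal; lra.
- move=> [[Hu _] [[Hz _] Hsum]].
  move: Hsum; rewrite /OFP_obj /OPP_obj.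
  case Ea: (esum Ks u) => [a||] //; case Eb: (conjugate (@sdot m d) (esum Gs) mu) => [b||] //;
  case Ec: (conjugate (@sdot n d) (esum Ks) y) => [c||] //;
  case Ed: (esum Gs zeta) => [c'||] //=; move=> [Hs].
  have F1 := conj_FY _ _ _ _ _ _ _ nK Ea Ec.
  have F2 := conj_FY _ _ _ _ _ _ _ nG Ed Eb.
  have Hid := dual_id n m d src dst y mu; rewrite -Hu Hz in Hid.
  have SK := FYrev n d Ks u y a c HPK Ea Ec ltac:(lra).
  have SG := FYrev m d Gs zeta mu c' b HPG Ed Eb ltac:(lra).
  have XK : forall i, exists x, f i x (u i) (w i) = @vzero (p i) /\ y i = h i x (u i) (w i).
    move=> i; case: (HK i) => _ [_ [_ HR]]; exact: (proj2 (HR _ _) (SK i)).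
  have XG : forall e, exists x, phi e x (zeta e) = @vzero (q e) /\ mu e = psi e x (zeta e).
    move=> e; case: (HG e) => _ [_ [_ HR]]; exact: (proj2 (HR _ _) (SG e)).
  case: (choice_dep _ (fun i => Vec (p i)) _ XK) => xs Hxs.
  case: (choice_dep _ (fun e => Vec (q e)) _ XG) => etas Hetas.
  exists xs, etas; split; [|split; [|split; [|split; [|split]]]].
  + by move=> i; case: (Hxs i).
  + by move=> i; case: (Hxs i).
  + by move=> e; case: (Hetas e).
  + by move=> e; case: (Hetas e).
  + by rewrite Hz.
  + exact: Hu.
Qed.
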